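(* Let $q$ be a prime power, $7\le n\le q$, $\alpha_1,\dots,\alpha_n\in\mathbb{F}_q$ distinct, $u_1,\dots,u_n\in\mathbb{F}_q^*$, and $H\in\mathbb{F}_q^{6\times n}$ with $H_{ab}=u_b\alpha_b^{a-1}$ (so $\ker H$ has distance $7$). Then the number of $e\in\mathbb{F}_q^n$ with $|e|=4$ for which there exists $e'\in\mathbb{F}_q^n$ with $|e'|\le 3$ and $He'=He$ is at most $$\frac{(n-4)(n-5)(n-6)}{6(q-1)^3}\cdot(q-1)^4\binom{n}{4}.$$
   Context: $|e|$ denotes the Hamming weight of $e\in\mathbb{F}_q^n$. *)

(* Defs.v *)
From mathcomp Require Import all_boot all_order all_algebra all_field.
Set Implicit Arguments. Unset Strict Implicit. Unset Printing Implicit Defensive.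
Import GRing.Theory.
Local Open Scope ring_scope.

Definition hwt (F : finFieldType) (n : nat) (e : 'cV[F]_n) : nat :=
  #|[set i : 'I_n | e i 0 != 0]|.

(* Generalized Reed-Solomon parity-check matrix H_{ab} = u_b alpha_b^(a-1),
   with rows indexed a = 1..6, i.e. 'I_6 index a' = a-1. *)
Definition grs_H (F : finFieldType) (n : nat) (alpha u : 'I_n -> F) : 'M[F]_(6, n) :=
  \matrix_(a < 6, b < n) (u b * alpha b ^+ a).

Definition num_bad (F : finFieldType) (n : nat) (H : 'M[F]_(6, n)) : nat :=
  #|[set e : 'cV[F]_n | (hwt e == 4)%N &&
       [exists e' : 'cV[F]_n, (hwt e' <= 3)%N && (H *m e' == H *m e)]]|.

(* Main.v *)
Require Import Defs.
From mathcomp Require Import all_boot all_order all_algebra all_field.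
From mathcomp Require Import ring zify.
Import GRing.Theory.
Local Open Scope ring_scope.

Section Helpers.
Set Implicit Arguments. Unset Strict Implicit.
Variables (F : finFieldType) (n : nat) (alpha u : 'I_n -> F).
Hypothesis alpha_inj : injective alpha.
Hypothesis u_nz : forall i, u i != 0.

Definition supp (e : 'cV[F]_n) := [set i | e i 0 != 0].

Lemma hwtE e : hwt e = #|supp e|. Proof. by []. Qed.

Lemma Lsum (c : 'cV[F]_n) (p : {poly F}) :
  grs_H alpha u *m c = 0 -> (size p <= 6)%N ->
  \sum_j u j * c j 0 * p.[alpha j] = 0.
Proof.
move=> Hc sp.
have Ha : forall a : 'I_6, \sum_j u j * alpha j ^+ a * c j 0 = 0.
  move=> a; transitivity ((grs_H alpha u *m c) a 0); last by rewrite Hc mxE.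
  by rewrite mxE; apply: eq_bigr => j _; rewrite mxE.
transitivity (\sum_j \sum_(a < 6) p`_a * (u j * alpha j ^+ a * c j 0)).
  apply: eq_bigr => j _; rewrite (horner_coef_wide _ sp) mulr_sumr.
  by apply: eq_bigr => a _; ring.
rewrite exchange_big /= big1 // => a _.
by rewrite -mulr_sumr Ha mulr0.
Qed.

Lemma L6 (c : 'cV[F]_n) :
  grs_H alpha u *m c = 0 -> (#|supp c| <= 6)%N -> c = 0.
Proof.
move=> Hc hs; apply/matrixP => i j; rewrite (ord1 j) mxE.
apply/eqP/negPn/negP => ci.
have iS : i \in supp c by rewrite inE.
set p := \prod_(x <- map alpha (enum (supp c :\ i))) ('X - x%:P).
have sp : (size p <= 6)%N.
  rewrite /p size_prod_XsubC size_map -cardE.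
  by apply: leq_trans hs; rewrite [X in (_ <= X)%N](cardsD1 i) iS.
have := @Lsum c p Hc sp.
rewrite (bigD1 i) //= big1 ?addr0.
  apply/eqP; rewrite !mulf_neq0 //.
  have := root_prod_XsubC (map alpha (enum (supp c :\ i))) (alpha i).
  rewrite -/p /root => ->; rewrite (mem_map alpha_inj) mem_enum.
  by rewrite !inE eqxx.
move=> k ki; have [ck|ck] := eqVneq (c k 0) 0; first by rewrite ck mulr0 mul0r.
have := root_prod_XsubC (map alpha (enum (supp c :\ i))) (alpha k).
rewrite -/p /root (mem_map alpha_inj) mem_enum !inE ki ck /= => /eqP ->.
by rewrite mulr0.
Qed.

Lemma suppN (e : 'cV[F]_n) i : i \notin supp e -> e i 0 = 0.
Proof. by rewrite inE negbK => /eqP. Qed.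

Lemma disj (e e' : 'cV[F]_n) : hwt e = 4%N -> (hwt e' <= 3)%N ->
  grs_H alpha u *m e' = grs_H alpha u *m e ->
  supp e' \subset ~: supp e /\ #|supp e'| = 3%N.
Proof.
move=> he he' HE.
set c := e - e'.
have Hc : grs_H alpha u *m c = 0 by rewrite /c mulmxBr HE subrr.
have cnz : c != 0.
  apply/eqP => c0; move: he'; have -> : e' = e.
    by apply/eqP; rewrite eq_sym -subr_eq0 -/c c0.
  by rewrite he.
have c7 : (7 <= #|supp c|)%N.
  rewrite ltnNge; apply/negP => h; by move/eqP: cnz; apply; apply: L6.
have sub : supp c \subset supp e :|: supp e'.
  apply/subsetP => i; rewrite /supp !inE /c !mxE; apply: contraR.
  by rewrite negb_or !negbK => /andP[/eqP -> /eqP ->]; rewrite subrr.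
have := subset_leq_card sub; rewrite cardsU.
move: he he'; rewrite !hwtE => he he'.
have := subset_leq_card (subsetIl (supp e) (supp e')).
move=> hI hU.
have I0 : #|supp e :&: supp e'| = 0%N by lia.
split; last by lia.
apply/subsetP => i ie'; rewrite inE; apply/negP => ie.
have := cards0_eq I0 => /setP /(_ i); by rewrite in_setI in_set0 ie ie'.
Qed.

Definition badset := [set e : 'cV[F]_n | (hwt e == 4)%N &&
       [exists e' : 'cV[F]_n, (hwt e' <= 3)%N && (grs_H alpha u *m e' == grs_H alpha u *m e)]].

Definition wit (e : 'cV[F]_n) :=
  if [pick e' | (hwt e' <= 3)%N && (grs_H alpha u *m e' == grs_H alpha u *m e)]
  is Some e' then supp e' else set0.
Definition xval (e : 'cV[F]_n) := if [pick i in supp e] is Some i then e i 0 else 0.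
Definition fmap e := (supp e, wit e, xval e).

Lemma witP e : e \in badset -> exists2 e',
  (hwt e' <= 3)%N && (grs_H alpha u *m e' == grs_H alpha u *m e) & wit e = supp e'.
Proof.
rewrite inE => /andP[_ /existsP [e0 h0]]; rewrite /wit.
by case: pickP => [e' he'|/(_ e0)]; [exists e' | rewrite h0].
Qed.

Lemma badw e : e \in badset -> hwt e = 4%N.
Proof. by rewrite inE => /andP[/eqP]. Qed.

Lemma pick_some e : hwt e = 4%N -> exists2 t, t \in supp e & [pick i in supp e] = Some t.
Proof.
move=> he; case: pickP => [t ht|h0]; first by exists t.
by move: he; rewrite hwtE (eq_card0 h0).
Qed.

Definition Tg := \bigcup_(T in [set T : {set 'I_n} | #|T| == 4%N])
   setX (setX [set T] [set R : {set 'I_n} | (R \subset ~: T) && (#|R| == 3%N)])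
        [set x : F | x != 0].

Lemma image_sub : fmap @: badset \subset Tg.
Proof.
apply/subsetP => p /imsetP [e eB ->].
have he := badw eB.
have [e' /andP[h1 /eqP h2] W] := witP eB.
have [RT R3] := disj he h1 h2.
have [t tT pk] := pick_some he.
apply/bigcupP; exists (supp e); first by rewrite inE -hwtE he.
rewrite /fmap /xval pk W !inE eqxx RT R3 /=.
by move: tT; rewrite inE.
Qed.

Lemma inj : {in badset &, injective fmap}.
Proof.
move=> e1 e2 B1 B2 [ES EW EX].
have he := badw B1.
have [e1' /andP[h1 /eqP h1'] W1] := witP B1.
have [e2' /andP[h2 /eqP h2'] W2] := witP B2.
have [RT R3] := disj he h1 h1'.
move: EX; rewrite /xval -ES; have [t tT ->] := pick_some he => EX.
set T := supp e1 in RT tT ES; set R := supp e1' in RT R3 W1.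
have E2R : supp e2' = R by rewrite -W2 -EW W1.
have nTR : forall i, i \in T -> i \notin R.
  by move=> i iT; apply/negP => /(subsetP RT); rewrite inE iT.
set d := (e1 - e1') - (e2 - e2').
have Hd : grs_H alpha u *m d = 0 by rewrite /d !mulmxBr h1' h2' !subrr.
have sd : supp d \subset (T :|: R) :\ t.
  apply/subsetP => i; rewrite [i \in supp d]inE /d !mxE => nz.
  rewrite in_setD1 in_setU; apply/andP; split.
    apply/eqP => eit; move: nz; rewrite eit.
    rewrite (suppN (nTR _ tT)) (suppN (i:=t) (e:=e2')) ?E2R ?nTR // EX.
    by rewrite !subr0 subrr eqxx.
  apply: contraTT nz; rewrite negb_or negbK => /andP[nT nR].
  rewrite (suppN nT) (suppN nR) (suppN (e:=e2)) -?ES // (suppN (e:=e2')) ?E2R //.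
  by rewrite !subrr.
have d0 : d = 0.
  apply: (L6 Hd); apply: leq_trans (subset_leq_card sd) _.
  have tU : t \in T :|: R by rewrite in_setU tT.
  have := cardsD1 t (T :|: R); rewrite tU add1n => hc.
  have [hU _] := leq_card_setU T R; move: hU; rewrite -/(hwt e1) he R3 => hU.
  by lia.
apply/matrixP => i j; rewrite (ord1 j).
have := congr1 (fun M : 'cV[F]_n => M i 0) d0; rewrite /d !mxE.
case iT : (i \in T).
  rewrite (suppN (nTR _ iT)) (suppN (e:=e2')) ?E2R ?nTR // !subr0.
  by move/eqP; rewrite subr_eq0 => /eqP.
have iT' : i \notin T by rewrite iT.
by rewrite (suppN iT') (suppN (e:=e2)) -?ES.
Qed.

Lemma card_bigcup_le (I T : finType) (P : pred I) (G : I -> {set T}) :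
  (#|\bigcup_(i | P i) G i| <= \sum_(i | P i) #|G i|)%N.
Proof.
apply: (big_ind2 (fun (A : {set T}) (m : nat) => #|A| <= m)%N) => //.
  by rewrite cards0.
move=> A1 m1 A2 m2 h1 h2; apply: leq_trans (leq_add h1 h2).
by rewrite cardsU leq_subr.
Qed.

Lemma count_bad : (#|badset| <= 'C(n, 4) * ('C(n - 4, 3) * #|F|.-1))%N.
Proof.
rewrite -(card_in_imset inj).
apply: leq_trans (subset_leq_card image_sub) _.
apply: leq_trans (card_bigcup_le _ _) _.
rewrite (eq_bigr (fun _ => 'C(n - 4, 3) * #|F|.-1)%N).
  by rewrite sum_nat_const card_draws card_ord.
move=> T; rewrite inE => /eqP T4.
rewrite !cardsX cards1 mul1n cards_draws.
have -> : #|~: T| = (n - 4)%N.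
  by have := cardsC T; rewrite T4 card_ord => h; lia.
congr (_ * _)%N; rewrite -(cardsC1 (0 : F)); apply: eq_card => x; by rewrite !inE.
Qed.
End Helpers.

Import Num.Theory.

Lemma bin3_6 m : ('C(m.+3, 3) * 6 = m.+3 * m.+2 * m.+1)%N.
Proof.
by rewrite (_ : 6 = 3`!)%N // bin_ffact !ffactnS ffactn0 /= muln1 mulnA.
Qed.

Theorem mainTheorem12 (F : finFieldType) (n : nat) (alpha u : 'I_n -> F) :
  (7 <= n)%N -> (n <= #|F|)%N ->
  injective alpha -> (forall i, u i != 0) ->
  (num_bad (grs_H alpha u))%:R <=
    ((n - 4) * (n - 5) * (n - 6))%:R / (6 * (#|F| - 1) ^ 3)%:R
      * ((#|F| - 1) ^ 4 * 'C(n, 4))%:R :> rat.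
Proof.
move=> n7 nq ai un.
have hc := @count_bad F n alpha u ai un.
have eA : ((n - 4) * (n - 5) * (n - 6) = 'C(n - 4, 3) * 6)%N.
  have -> : (n - 4 = (n - 7).+3)%N by lia.
  rewrite bin3_6; congr (_ * _ * _)%N; lia.
rewrite eA.
have dnz : ((#|F| - 1)%:R : rat) != 0 by rewrite pnatr_eq0; lia.
have -> : (('C(n - 4, 3) * 6)%:R / (6 * (#|F| - 1) ^ 3)%:R
      * ((#|F| - 1) ^ 4 * 'C(n, 4))%:R : rat)
    = ('C(n, 4) * ('C(n - 4, 3) * (#|F| - 1)))%:R.
  rewrite !natrM; field; rewrite ?mulf_neq0 // ?pnatr_eq0.
rewrite ler_nat; move: hc; rewrite subn1 => hc.
exact: hc.
Qed.
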